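(* Let $G$ be a finite group of order $n\ge 3$, $k$ a positive integer, $a_1,\dots,a_k,b_1,\dots,b_k$ independent uniformly random elements of $G$, and for $(i,j)\in V=[k]\times[k]$ and $x\in G$ let $I_{(i,j)}(x)$ be the indicator of $\{x=a_ib_j \text{ or } x=b_ja_i\}$. Let $\Gamma=(V,E)$ be the graph with $(i,j)\sim(\ell,m)$ iff ($i=\ell$ and $j\ne m$) or ($i\ne \ell$ and $j=m$). For $x\ne y\in G$ let $\Gamma_{x,y}$ be the graph on $V\times\{x,y\}$ with $(v,z)\sim(u,z')$ iff $\{v,u\}\in E$, and $J(v,z)=I_v(z)$. Let $x\ne y\in G$. (1) Both $\Delta(\Gamma,\{I_v(x)\}_{v\in V})$ and $\Delta^*(\Gamma,\{I_v(x)\}_{v\in V})$ are at most $4\cdot\frac{k^3}{n^2}\exp\big(\frac{6k}{n-2}\big)$. (2) Both $\Delta(\Gamma_{x,y},\{J(v,z)\}_{(v,z)\in V\times\{x,y\}})$ and $\Delta^*(\Gamma_{x,y},\{J(v,z)\}_{(v,z)\in V\times\{x,y\}})$ are at most $16\cdot\frac{k^3}{n^2}\exp\big(\frac{12k}{n-2}\big)$.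
   Context: $[k]=\{1,\dots,k\}$. For a vertex $w$ and a set $S$ of vertices, $w\sim S$ means there is an edge between $w$ and some element of $S$ (so this may include elements of $S$ themselves). For a family of Bernoulli random variables $\{X_i\}_{i\in W}$ and a graph $\Gamma$ on $W$, define $$\Delta(\Gamma,\{X_i\})=\frac12\sum_{i\in W}\sum_{j\sim i}\mathbb{E}[X_iX_j]\prod_{l\sim\{i,j\}}(1-\mathbb{E}[X_l])^{-1},$$ $$\Delta^*(\Gamma,\{X_i\})=\frac12\sum_{i\in W}\sum_{j\sim i}\mathbb{E}[X_i]\mathbb{E}[X_j]\prod_{l\sim\{i,j\}}(1-\mathbb{E}[X_l])^{-1}.$$ *)

(* Defs.v *)
From HB Require Import structures.
From mathcomp Require Import all_boot all_order all_algebra all_fingroup.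
From mathcomp Require Import reals sequences exp.
Set Implicit Arguments. Unset Strict Implicit. Unset Printing Implicit Defensive.
Import Order.TTheory GRing.Theory Num.Theory.
Local Open Scope ring_scope.

Section Defs.
Variable R : realType.

Definition Ex (Om : finType) (f : Om -> bool) : R :=
  #|[pred w | f w]|%:R / #|Om|%:R.

(* Delta(Gamma, {X_i}) for a graph given by a relation e on W. l ~ {i,j} means
   e l i || e l j. *)
Definition Delta (Om W : finType) (e : rel W) (X : W -> Om -> bool) : R :=
  2^-1 * \sum_(i : W) \sum_(j : W | e j i)
    Ex (fun w => X i w && X j w) *
    \prod_(l : W | e l i || e l j) (1 - Ex (X l))^-1.

Definition DeltaStar (Om W : finType) (e : rel W) (X : W -> Om -> bool) : R :=
  2^-1 * \sum_(i : W) \sum_(j : W | e j i)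
    Ex (X i) * Ex (X j) *
    \prod_(l : W | e l i || e l j) (1 - Ex (X l))^-1.
End Defs.

(* Sample space: (a_1..a_k, b_1..b_k), uniform on G^k x G^k, i.e. independent
   uniform elements. *)
Definition Omega (gT : finGroupType) (k : nat) : finType :=
  ({ffun 'I_k -> gT} * {ffun 'I_k -> gT})%type.

Definition Vk (k : nat) : finType := ('I_k * 'I_k)%type.

Definition GammaE (k : nat) : rel (Vk k) :=
  fun v u => ((v.1 == u.1) && (v.2 != u.2)) || ((v.1 != u.1) && (v.2 == u.2)).

Definition Ind (gT : finGroupType) (k : nat) (x : gT) (v : Vk k)
  (w : Omega gT k) : bool :=
  (x == (w.1 v.1 * w.2 v.2)%g) || (x == (w.2 v.2 * w.1 v.1)%g).

(* Gamma_{x,y}: vertex set V x {x,y}, encoded as V x bool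
   (true <-> x, false <-> y). *)
Definition Gamma2E (k : nat) : rel (Vk k * bool) :=
  fun p q => GammaE p.1 q.1.

Definition J (gT : finGroupType) (k : nat) (x y : gT) (p : Vk k * bool)
  (w : Omega gT k) : bool :=
  Ind (if p.2 then x else y) p.1 w.

(* Main.v *)
Require Import Defs.
From HB Require Import structures.
From mathcomp Require Import all_boot all_order all_algebra all_fingroup.
From mathcomp Require Import reals sequences exp.
From mathcomp Require Import ring lra.
Import Order.TTheory GRing.Theory Num.Theory.

Module H1M.
Local Open Scope ring_scope.

Lemma Dgen (R : realType) (W Om : finType) (e : rel W) (X : W -> Om -> bool)
  (T : W -> W -> R) (q c : R) (M N : nat) :
  1 <= c -> 0 <= q ->
  (forall l, 0 < 1 - Ex R (X l) /\ (1 - Ex R (X l))^-1 <= c) ->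
  (forall i j, e j i -> 0 <= T i j <= q) ->
  (forall i j, e j i -> (#|[pred l | e l i || e l j]| <= M)%N) ->
  (\sum_i #|[pred j | e j i]| <= N)%N ->
  2^-1 * \sum_i \sum_(j | e j i) T i j *
     \prod_(l | e l i || e l j) (1 - Ex R (X l))^-1
  <= 2^-1 * (N%:R * (q * c ^+ M)).
Proof.
move=> c1 q0 hX hT hM hN.
have c0 : 0 <= c by apply: le_trans c1.
rewrite ler_pM2l ?invr_gt0 ?ltr0n //.
apply: (@le_trans _ _ (\sum_i \sum_(j | e j i) (q * c ^+ M))).
  apply: ler_sum => i _; apply: ler_sum => j hj.
  have [T0 Tq] := andP (hT _ _ hj).
  have P0 : 0 <= \prod_(l | e l i || e l j) (1 - Ex R (X l))^-1.
    by apply: prodr_ge0 => l _; have [h _] := hX l; rewrite invr_ge0 ltW.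
  apply: ler_pM => //.
  apply: (@le_trans _ _ (\prod_(l | e l i || e l j) c)).
    apply: ler_prod => l _; have [h1 h2] := hX l.
    by rewrite h2 andbT invr_ge0 ltW.
  rewrite (@prodr_const _ _ [pred l | e l i || e l j]).
  by apply: ler_weXn2l => //; apply: hM.
under eq_bigr => i _ do rewrite (@sumr_const _ _ [pred j | e j i]) -mulr_natl.
rewrite -mulr_suml -natr_sum.
by apply: ler_wpM2r; [apply: mulr_ge0 => //; apply: exprn_ge0 | rewrite ler_nat].
Qed.

End H1M.
Import H1M.

Module H2M.

Lemma card_le2 (T : finType) (P A B : pred T) :
  (forall l, P l -> A l || B l) -> (#|P| <= #|A| + #|B|)%N.
Proof.
move=> h; apply: (@leq_trans #|[predU A & B]|).
  by apply: subset_leq_card; apply/subsetP => l; rewrite !inE => /h.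
by rewrite -cardUI leq_addr.
Qed.

Lemma card_le3 (T : finType) (P A B C : pred T) :
  (forall l, P l -> [|| A l, B l | C l]) -> (#|P| <= #|A| + #|B| + #|C|)%N.
Proof.
move=> h; apply: (@leq_trans (#|[predU A & B]| + #|C|)).
  by apply: card_le2 => l /h; rewrite !inE orbA.
by rewrite leq_add2r -cardUI leq_addr.
Qed.

Lemma card_row k (a : 'I_k) : #|[pred l : Vk k | l.1 == a]| = k.
Proof.
transitivity #|[predX pred1 a & 'I_k]|.
  by apply: eq_card => -[u v]; rewrite !inE andbT.
by rewrite cardX card1 card_ord mul1n.
Qed.

Lemma card_col k (a : 'I_k) : #|[pred l : Vk k | l.2 == a]| = k.
Proof.
transitivity #|[predX 'I_k & pred1 a]|.
  by apply: eq_card => -[u v]; rewrite !inE.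
by rewrite cardX card1 card_ord muln1.
Qed.

Lemma nbr_card k (i : Vk k) : (#|[pred j | GammaE j i]| <= 2 * k)%N.
Proof.
rewrite mul2n -addnn.
apply: leq_trans (@card_le2 _ _ [pred l : Vk k | l.1 == i.1] [pred l : Vk k | l.2 == i.2] _) _.
  move=> l; rewrite /GammaE /=.
  by case/orP => /andP[h1 h2]; rewrite ?h1 ?h2 ?orbT.
by rewrite card_row card_col.
Qed.

Lemma lcard k (i j : Vk k) : GammaE j i ->
  (#|[pred l | GammaE l i || GammaE l j]| <= 3 * k)%N.
Proof.
rewrite /GammaE => h.
have E3 : (3 * k = k + k + k)%N by rewrite !mulSn mul0n addn0 addnA.
rewrite E3.
case/orP: h => /andP[e1 e2].
- apply: leq_trans (@card_le3 _ _ [pred l : Vk k | l.1 == i.1] [pred l : Vk k | l.2 == i.2] [pred l : Vk k | l.2 == j.2] _) _.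
    move=> l /=; rewrite (eqP e1).
    by case/orP => /orP[] /andP[h1 h2]; rewrite ?h1 ?h2 ?orbT.
  by rewrite !card_row !card_col.
- apply: leq_trans (@card_le3 _ _ [pred l : Vk k | l.2 == i.2] [pred l : Vk k | l.1 == i.1] [pred l : Vk k | l.1 == j.1] _) _.
    move=> l /=; rewrite (eqP e2).
    by case/orP => /orP[] /andP[h1 h2]; rewrite ?h1 ?h2 ?orbT.
  by rewrite !card_row !card_col.
Qed.

Lemma card_pairb (T : finType) (A : pred T) :
  #|[pred q : T * bool | A q.1]| = (#|A| * 2)%N.
Proof.
transitivity #|[predX A & (@predT bool)]|.
  by apply: eq_card => -[u v]; rewrite !inE andbT.
rewrite cardX; congr (_ * _)%N; by rewrite -(card_bool); apply: eq_card.
Qed.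

Lemma nbr_card2 k (p : Vk k * bool) : (#|[pred q | Gamma2E q p]| <= 4 * k)%N.
Proof.
rewrite /Gamma2E (@card_pairb _ [pred u | GammaE u p.1]).
have -> : (4 * k = 2 * k * 2)%N by rewrite mulnAC.
by rewrite leq_mul2r nbr_card orbT.
Qed.

Lemma lcard2 k (p q : Vk k * bool) : Gamma2E q p ->
  (#|[pred l | Gamma2E l p || Gamma2E l q]| <= 6 * k)%N.
Proof.
rewrite /Gamma2E => h.
rewrite (@card_pairb _ [pred u | GammaE u p.1 || GammaE u q.1]).
have -> : (6 * k = 3 * k * 2)%N by rewrite mulnAC.
by rewrite leq_mul2r lcard ?orbT.
Qed.

End H2M.
Import H2M.

Module H3M.
Set Implicit Arguments. Unset Strict Implicit.

Lemma card_sum (Om : finType) (P : pred Om) : #|P| = (\sum_w (P w : nat))%N.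
Proof. by rewrite -sum1_card big_mkcond. Qed.

Lemma count_shift (Om T : finType) (P : pred Om) (s : T -> Om -> Om) (B : nat) :
  (forall t, injective (s t)) -> (forall w, (\sum_t (P (s t w) : nat) <= B)%N) ->
  (#|T| * #|P| <= B * #|Om|)%N.
Proof.
move=> hinj hB.
have e : forall t, #|P| = (\sum_w (P (s t w) : nat))%N.
  by move=> t; rewrite card_sum (reindex_inj (hinj t)).
rewrite -sum_nat_const.
rewrite (eq_bigr (fun t => \sum_w (P (s t w) : nat))%N); last by move=> t _; apply: e.
rewrite exchange_big /= mulnC -sum_nat_const.
by apply: leq_sum => w _; apply: hB.
Qed.

Lemma sum_inj1 (gT : finType) (phi : gT -> gT) (x : gT) :
  injective phi -> (\sum_g (x == phi g : nat))%N = 1%N.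
Proof.
move=> hi; have -> : (\sum_g (x == phi g : nat) = \sum_g (x == g : nat))%N by rewrite [RHS](reindex_inj hi).
rewrite (bigD1 x) //= eqxx big1 // => g; rewrite eq_sym => /negbTE ->.
by [].
Qed.

Lemma orb_le (a b : bool) : ((a || b : nat) <= a + b)%N.
Proof. by case: a; case: b. Qed.

Lemma sum_or2 (gT : finType) (phi psi : gT -> gT) (x : gT) :
  injective phi -> injective psi ->
  (\sum_g ((x == phi g) || (x == psi g) : nat) <= 2)%N.
Proof.
move=> h1 h2; apply: leq_trans (_ : (\sum_g ((x == phi g : nat) + (x == psi g : nat)) <= 2))%N.
  by apply: leq_sum => g _; apply: orb_le.
by rewrite big_split /= !sum_inj1.
Qed.

Section G.
Variable gT : finGroupType.
Local Open Scope group_scope.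

Definition shb k (j : 'I_k) (g : gT) (w : Omega gT k) : Omega gT k :=
  (w.1, [ffun t => if t == j then w.2 t * g else w.2 t]).
Definition sha k (j : 'I_k) (g : gT) (w : Omega gT k) : Omega gT k :=
  ([ffun t => if t == j then w.1 t * g else w.1 t], w.2).

Lemma shb_inj k j g : injective (@shb k j g).
Proof.
move=> [a1 b1] [a2 b2] /= [-> hb]; congr pair; apply/ffunP => t.
have := congr1 (fun f : {ffun _ -> _} => f t) hb; rewrite !ffunE.
by case: (t == j) => //; apply: mulIg.
Qed.

Lemma sha_inj k j g : injective (@sha k j g).
Proof.
move=> [a1 b1] [a2 b2] /= [ha ->]; congr pair; apply/ffunP => t.
have := congr1 (fun f : {ffun _ -> _} => f t) ha; rewrite !ffunE.
by case: (t == j) => //; apply: mulIg.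
Qed.
End G.

End H3M.
Import H3M.

Local Open Scope ring_scope.

Lemma Ex_le (R : realType) (Om : finType) (f : Om -> bool) (m B : nat) :
  (0 < m)%N -> (m * #|[pred w | f w]| <= B * #|Om|)%N ->
  Ex R f <= (B%:R / m%:R)%R.
Proof.
move=> m0 h; rewrite /Ex.
case: (posnP #|Om|) => [->|hO].
  by rewrite invr0 mulr0 divr_ge0 // ler0n.
rewrite ler_pdivrMr ?ltr0n // mulrAC ler_pdivlMr ?ltr0n //.
by rewrite -!natrM ler_nat mulnC.
Qed.

Section G.
Variable gT : finGroupType.
Local Open Scope group_scope.

Lemma inj1 (a b : gT) : injective (fun g => a * (b * g)).
Proof. by move=> g1 g2 /mulgI /mulgI. Qed.
Lemma inj2 (a b : gT) : injective (fun g => (b * g) * a).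
Proof. by move=> g1 g2 /mulIg /mulgI. Qed.
Lemma inj3 (a b : gT) : injective (fun g => (a * g) * b).
Proof. by move=> g1 g2 /mulIg /mulgI. Qed.

Lemma Ind_single k (x1 : gT) (v : Vk k) w :
  (\sum_g (Ind x1 v (shb v.2 g w) : nat) <= 2)%N.
Proof.
rewrite /Ind /shb /=.
under eq_bigr => g _ do rewrite ffunE eqxx.
exact: sum_or2 (inj1 _ _) (inj2 _ _).
Qed.

Lemma Ex_single (R : realType) k (x1 : gT) (v : Vk k) :
  Ex R (Ind x1 v) <= (2%:R / #|gT|%:R)%R.
Proof.
apply: Ex_le; first by apply/card_gt0P; exists 1.
apply: (@count_shift _ gT _ (fun g => @shb gT k v.2 g)).
  by move=> g; apply: shb_inj.
by move=> w; apply: Ind_single.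
Qed.

Lemma sum_prod (A B : gT -> bool) :
  (\sum_g \sum_h (A g && B h : nat) = (\sum_g (A g : nat)) * (\sum_h (B h : nat)))%N.
Proof.
rewrite big_distrl; apply: eq_bigr => g _; rewrite big_distrr.
by apply: eq_bigr => h _; case: (A g); case: (B h).
Qed.

Lemma Ind_pair (R : realType) k (x1 x2 : gT) (v u : Vk k) : GammaE u v ->
  Ex R (fun w => Ind x1 v w && Ind x2 u w) <= (4%:R / (#|gT| * #|gT|)%:R)%R.
Proof.
move=> huv.
have n0 : (0 < #|gT|)%N by apply/card_gt0P; exists 1.
apply: Ex_le; first by rewrite muln_gt0 n0.
case/orP: huv => /andP[e1 e2].
- rewrite -card_prod.
  apply: (@count_shift _ _ _ (fun t : gT * gT => fun w => shb v.2 t.1 (shb u.2 t.2 w))).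
    by move=> t w1 w2 /shb_inj /shb_inj.
  move=> w.
  rewrite -(pair_bigA _ (fun g h => (Ind x1 v (shb v.2 g (shb u.2 h w)) && Ind x2 u (shb v.2 g (shb u.2 h w)) : nat))) /=.
  have ne : (v.2 == u.2) = false by rewrite eq_sym; apply/negbTE.
  have ne' : (u.2 == v.2) = false by apply/negbTE.
  under eq_bigr => g _ do under eq_bigr => h _ do
    rewrite /Ind /shb /= !ffunE !eqxx ne ne' (eqP e1).
  rewrite sum_prod.
  by apply: (@leq_trans (2*2)) => //; apply: leq_mul; apply: sum_or2 (inj1 _ _) (inj2 _ _).
- rewrite -card_prod.
  apply: (@count_shift _ _ _ (fun t : gT * gT => fun w => sha v.1 t.1 (sha u.1 t.2 w))).
    by move=> t w1 w2 /sha_inj /sha_inj.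
  move=> w.
  rewrite -(pair_bigA _ (fun g h => (Ind x1 v (sha v.1 g (sha u.1 h w)) && Ind x2 u (sha v.1 g (sha u.1 h w)) : nat))) /=.
  have ne : (v.1 == u.1) = false by rewrite eq_sym; apply/negbTE.
  have ne' : (u.1 == v.1) = false by apply/negbTE.
  under eq_bigr => g _ do under eq_bigr => h _ do
    rewrite /Ind /sha /= !ffunE !eqxx ne ne' (eqP e2).
  rewrite sum_prod.
  by apply: (@leq_trans (2*2)) => //; apply: leq_mul; apply: sum_or2 (inj3 _ _) (inj1 _ _).
Qed.
End G.


Lemma inv_bound (R : realType) (n E : R) : 2 < n -> 0 <= E -> E <= 2 / n ->
  0 < 1 - E /\ (1 - E)^-1 <= expR (2 / (n - 2)).
Proof.
move=> n2 E0 En.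
have n0 : 0 < n by apply: lt_trans n2.
have h2n : 2 / n < 1 by rewrite ltr_pdivrMr // mul1r.
have hE : 0 < 1 - E by rewrite subr_gt0; apply: le_lt_trans h2n.
split => //.
have n20 : 0 < n - 2 by rewrite subr_gt0.
rewrite -[_^-1]mul1r ler_pdivrMr //.
apply: le_trans (_ : (1 + 2 / (n - 2)) * (1 - 2 / n) <= _).
  have -> : (1 + 2 / (n - 2)) * (1 - 2 / n) = 1.
    by field; rewrite (gt_eqF n0) (gt_eqF n20).
  by [].
apply: ler_pM.
- by rewrite addr_ge0 // divr_ge0 // ltW.
- by rewrite subr_ge0 ltW.
- exact: expR_ge1Dx.
- by rewrite lerB.
Qed.

Theorem lemma4p8 (R : realType) (gT : finGroupType) (k : nat) (x y : gT) :
  (2 < #|gT|)%N -> (0 < k)%N -> x != y ->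
  let n : R := #|gT|%:R in
  let kk : R := k%:R in
  (Delta R (@GammaE k) (@Ind gT k x) <= 4 * (kk ^+ 3 / n ^+ 2) * expR (6 * kk / (n - 2))
   /\ DeltaStar R (@GammaE k) (@Ind gT k x) <= 4 * (kk ^+ 3 / n ^+ 2) * expR (6 * kk / (n - 2)))
  /\
  (Delta R (@Gamma2E k) (@J gT k x y) <= 16 * (kk ^+ 3 / n ^+ 2) * expR (12 * kk / (n - 2))
   /\ DeltaStar R (@Gamma2E k) (@J gT k x y) <= 16 * (kk ^+ 3 / n ^+ 2) * expR (12 * kk / (n - 2))).
Proof.
move=> hn hk hxy n kk.
have n2 : 2 < n by rewrite /n (ltr_nat R 2).
have n0 : 0 < n by apply: lt_trans n2.
have n20 : n - 2 != 0 by rewrite subr_eq0 gt_eqF.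
have Ex0 : forall (Om : finType) (f : Om -> bool), 0 <= Ex R f.
  by move=> Om f; rewrite /Ex divr_ge0 // ler0n.
set c := expR (2 / (n - 2)).
have c1 : 1 <= c by apply: le_trans (expR_ge1Dx _); rewrite lerDl divr_ge0 // subr_ge0 ltW.
set q : R := 4%:R / (#|gT| * #|gT|)%:R.
have q0 : 0 <= q by rewrite /q divr_ge0 // ler0n.
have hS : forall (x1 x2 : gT) (v u : Vk k), 0 <= Ex R (Ind x1 v) * Ex R (Ind x2 u) <= q.
  move=> x1 x2 v u; rewrite mulr_ge0 //=.
  apply: le_trans (_ : 2 / n * (2 / n) <= q).
    by apply: ler_pM => //; apply: Ex_single.
  rewrite /q /n natrM; rewrite le_eqVlt; apply/orP; left; apply/eqP; field.
  by rewrite gt_eqF.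
have hX : forall (x1 : gT) (v : Vk k), 0 < 1 - Ex R (Ind x1 v) /\ (1 - Ex R (Ind x1 v))^-1 <= c.
  by move=> x1 v; rewrite /c; apply: inv_bound => //; apply: Ex_single.
have cardV : #|Vk k| = (k * k)%N by rewrite card_prod card_ord.
have N1 : (\sum_(i : Vk k) #|[pred j | GammaE j i]| <= k * k * (2 * k))%N.
  apply: (@leq_trans (\sum_(i : Vk k) (2 * k))%N).
    by apply: leq_sum => i _; apply: nbr_card.
  by rewrite sum_nat_const cardV.
have N2 : (\sum_(i : Vk k * bool) #|[pred j | Gamma2E j i]| <= k * k * 2 * (4 * k))%N.
  apply: (@leq_trans (\sum_(i : Vk k * bool) (4 * k))%N).
    by apply: leq_sum => i _; apply: nbr_card2.
  by rewrite sum_nat_const card_prod cardV card_bool.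
have fin1 : 2^-1 * ((k * k * (2 * k))%:R * (q * c ^+ (3 * k))) = 4 * (kk ^+ 3 / n ^+ 2) * expR (6 * kk / (n - 2)).
  rewrite /c -expRM_natl !mulrA; congr (_ * expR _).
    rewrite /q /kk /n !natrM; field; rewrite pnatr_eq0 -lt0n; exact: ltn_trans hn.
  rewrite natrM /kk; field => //.
have fin2 : 2^-1 * ((k * k * 2 * (4 * k))%:R * (q * c ^+ (6 * k))) = 16 * (kk ^+ 3 / n ^+ 2) * expR (12 * kk / (n - 2)).
  rewrite /c -expRM_natl !mulrA; congr (_ * expR _).
    rewrite /q /kk /n !natrM; field; rewrite pnatr_eq0 -lt0n; exact: ltn_trans hn.
  rewrite natrM /kk; field => //.
split; split.
all: first [rewrite -fin1 | rewrite -fin2]; apply: Dgen => //.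
all: try (by move=> l; apply: hX).
all: try (by move=> i j h; rewrite Ex0; apply: Ind_pair).
all: try (by move=> i j h; rewrite Ex0; exact: (Ind_pair _ _ _ h)).
all: try (by move=> i j h; apply: hS).
all: try (by move=> i j h; exact: (hS _ _ i.1 j.1)).
all: try (by move=> i j h; apply: lcard).
all: try (by move=> i j h; apply: lcard2).
Qed.
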